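(* Let $m \equiv 1 \pmod 4$ with $m > 1$, $n = 3^m - 1$, $v = (3^{(m+1)/2}-1)/2$ and $\delta = (3^{(m-1)/2}+5)/2$. Then $\gcd(v,n) = 1$, and, setting $T_{(2,3,m)}(v) = \{ vi \bmod n : i \in T_{(2,3,m)}\}$, we have $\{n-(\delta-1), \ldots, n-2, n-1\} \subseteq T_{(2,3,m)}(v)$.
   Context: For an integer $0 \le j \le n-1$ with $3$-adic expansion $j = \sum_{t=0}^{m-1} j_t 3^t$, $j_t \in \{0,1,2\}$, let $w_3(j) = \sum_{t=0}^{m-1} j_t$. For distinct $i_1,i_2 \in \{0,1,2,3\}$, $T_{(i_1,i_2,m)} = \{1 \le j \le n-1 : w_3(j) \equiv i_1 \text{ or } i_2 \pmod 4\}$. For an integer $b$, $b \bmod n$ is the unique $b_0 \in \{0,\ldots,n-1\}$ with $b \equiv b_0 \pmod n$. *)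

(* Defs.v *)
From mathcomp Require Import all_boot.
Set Implicit Arguments. Unset Strict Implicit. Unset Printing Implicit Defensive.

Definition digit3 (j t : nat) : nat := (j %/ 3 ^ t) %% 3.

Definition w3 (m j : nat) : nat := \sum_(0 <= t < m) digit3 j t.

Definition T_set (i1 i2 m : nat) : pred nat :=
  fun j => (1 <= j <= (3 ^ m - 1) - 1) &&
           ((w3 m j %% 4 == i1) || (w3 m j %% 4 == i2)).

Definition T_scaled (i1 i2 m v : nat) : pred nat :=
  fun k => [exists i : 'I_(3 ^ m - 1), T_set i1 i2 m i && (k == (v * i) %% (3 ^ m - 1))].

(* Main.v *)
Require Import Defs.
From mathcomp Require Import all_boot zify.


Lemma digit3_split t1 a b t : a < 3 ^ t1 ->
  digit3 (a + 3 ^ t1 * b) t = if t < t1 then digit3 a t else digit3 b (t - t1).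
Proof.
move=> ha; rewrite /digit3; case: ifP => ht.
  have -> : 3 ^ t1 = 3 ^ (t1 - t).-1 * 3 * 3 ^ t.
    by rewrite -expnSr prednK ?subn_gt0 // -expnD subnK // ltnW.
  rewrite mulnAC addnC divnMDl ?expn_gt0 //.
  by rewrite mulnAC modnMDl.
have -> : 3 ^ t = 3 ^ t1 * 3 ^ (t - t1) by rewrite -expnD subnKC // leqNgt ht.
rewrite divnMA addnC mulnC divnMDl ?expn_gt0 // (divn_small ha) addn0 //.
Qed.

Lemma w3_split t1 t2 a b : a < 3 ^ t1 ->
  w3 (t1 + t2) (a + 3 ^ t1 * b) = w3 t1 a + w3 t2 b.
Proof.
move=> ha; rewrite /w3 (@big_cat_nat _ _ _ t1) ?leq_addr //=.
congr (_ + _).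
  apply: eq_big_nat => t /andP [_ ht]; by rewrite digit3_split // ht.
rewrite -{1}(add0n t1) big_addn addKn.
apply: eq_big_nat => t _; rewrite digit3_split // ltnNge leq_addl /=.
by rewrite addnK.
Qed.

Lemma w3_1 d : d < 3 -> w3 1 d = d.
Proof. by move=> hd; rewrite /w3 big_nat1 /digit3 expn0 divn1 modn_small. Qed.

Lemma w3_0 x : w3 0 x = 0.
Proof. by rewrite /w3 big_geq. Qed.

Lemma w3_par t x : x < 3 ^ t -> w3 t x %% 2 = x %% 2.
Proof.
elim: t x => [|t IH] x hx.
  by rewrite w3_0; move: hx; rewrite expn0 ltnS leqn0 => /eqP ->.
have hy : x %/ 3 < 3 ^ t by rewrite ltn_divLR // mulnC -expnS.
have ex : x = x %% 3 + 3 ^ 1 * (x %/ 3) by rewrite expn1 mulnC addnC -divn_eq.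
rewrite ex -add1n w3_split ?expn1 ?ltn_mod // w3_1 ?ltn_mod //.
have := IH _ hy. move: (x %% 3) (x %/ 3) (w3 t (x %/ 3)) => r y w. lia.
Qed.

Lemma w3_full t : w3 t (3 ^ t - 1) = 2 * t.
Proof.
elim: t => [|t IH]; first by rewrite w3_0.
have e : 3 ^ t.+1 - 1 = 2 + 3 ^ 1 * (3 ^ t - 1).
  have := expn_gt0 3 t; rewrite expnS expn1; lia.
by rewrite e -add1n w3_split // w3_1 // IH; lia.
Qed.


Lemma pick m v k i : i < 3 ^ m - 1 -> 1 <= i ->
  (w3 m i %% 4 = 2 \/ w3 m i %% 4 = 3) -> k = v * i %% (3 ^ m - 1) ->
  T_scaled 2 3 m v k.
Proof.
move=> hi h1 hw hk; apply/existsP; exists (Ordinal hi) => /=.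
rewrite /T_set /= h1 hk eqxx andbT /=.
have -> : i <= 3 ^ m - 1 - 1 by lia.
by case: hw => ->.
Qed.

Lemma modlem a j K n : a + j = K * n -> 1 <= j <= n -> a %% n = n - j.
Proof.
move=> e hj.
have hK : 1 <= K by case: K e => [|K]; [rewrite mul0n; lia| done].
have -> : a = (K - 1) * n + (n - j).
  have : K * n = (K - 1) * n + n by rewrite -{1}(subnK hK) mulnDl mul1n.
  lia.
rewrite modnMDl modn_small //; lia.
Qed.

Lemma w3_struct s a d c : a < 3 ^ (2 * s) -> d < 3 ->
  w3 (4 * s + 1) (a + 3 ^ (2 * s) * (d + 3 ^ 1 * c)) = w3 (2 * s) a + d + w3 (2 * s) c.
Proof.
move=> ha hd.
have -> : 4 * s + 1 = 2 * s + (1 + 2 * s) by lia.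
rewrite w3_split // w3_split ?expn1 // w3_1 //; lia.
Qed.

Lemma sub2 y : 0 < y -> 3 * y - 2 = 1 + 3 * (y - 1).
Proof. lia. Qed.

Lemma Lodd_lt {p t j} : 1 < p -> 2 * t + 1 + j = 2 * p -> 1 <= j ->
 2 * t + 1 + (4 * p + 1) * (1 + 3 * (2 * t + 1)) < 48 * (p * p) + 24 * p + 2.
Proof. move=> hp ht hj.
have h1 := congr1 (muln p) ht.
have h2 : p <= p * j by rewrite leq_pmulr.
nia.
Qed.
Lemma Lodd_eq {p t j} : 1 < p -> 2 * t + 1 + j = 2 * p ->
 (6 * p + 1) * (2 * t + 1 + (4 * p + 1) * (1 + 3 * (2 * t + 1))) + j = (3 * t + 2) * (48 * (p * p) + 24 * p + 2).
Proof. move=> hp ht.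
have -> : j = 2 * p - (2 * t + 1) by lia.
nia.
Qed.
Lemma Lev_lt {p t j} : 1 < p -> 2 * t + j = 4 * p -> 2 <= j ->
 2 * t + (4 * p + 1) * (2 + 3 * (2 * t)) < 48 * (p * p) + 24 * p + 2.
Proof. move=> hp ht hj.
have h1 := congr1 (muln p) ht.
have h2 : p * 2 <= p * j by rewrite leq_mul2l hj orbT.
nia.
Qed.
Lemma Lev_eq {p t j} : 1 < p -> 2 * t + j = 4 * p ->
 (6 * p + 1) * (2 * t + (4 * p + 1) * (2 + 3 * (2 * t))) + j = (3 * t + 1) * (48 * (p * p) + 24 * p + 2).
Proof. move=> hp ht.
have -> : j = 4 * p - 2 * t by lia.
nia.
Qed.
Lemma Lsp_lt {p} : 1 < p ->
 (4 * p + 1 - 2) + (4 * p + 1) * (0 + 3 * (4 * p + 1 - 1)) < 48 * (p * p) + 24 * p + 2.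
Proof. move=> hp. nia. Qed.
Lemma Lsp_eq {p} : 1 < p ->
 (6 * p + 1) * ((4 * p + 1 - 2) + (4 * p + 1) * (0 + 3 * (4 * p + 1 - 1))) + (2 * p + 1) = (6 * p) * (48 * (p * p) + 24 * p + 2).
Proof. move=> hp. have -> : 4 * p + 1 - 2 = 4 * p - 1 by lia.
have -> : 4 * p + 1 - 1 = 4 * p by lia.
nia. Qed.


Theorem lemma7 (m : nat) :
  m %% 4 = 1 -> 1 < m ->
  let n := 3 ^ m - 1 in
  let v := (3 ^ ((m + 1) %/ 2) - 1) %/ 2 in
  let delta := (3 ^ ((m - 1) %/ 2) + 5) %/ 2 in
  coprime v n /\
  (forall k, n - (delta - 1) <= k <= n - 1 -> T_scaled 2 3 m v k).
Proof.
move=> hm4 hm1 n v delta.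
set s := m %/ 4.
have hm : m = 4 * s + 1 by rewrite /s; lia.
have hs : 1 <= s by rewrite /s; lia.
have e1 : (m + 1) %/ 2 = 2 * s + 1 by rewrite hm; lia.
have e2 : (m - 1) %/ 2 = 2 * s by rewrite hm; lia.
set x := 3 ^ (2 * s).
have hx4 : x %% 4 = 1.
  by rewrite /x expnM -modnXm (_ : 3 ^ 2 %% 4 = 1) // exp1n.
have hx9 : 9 <= x.
  by rewrite /x (_ : 9 = 3 ^ 2) // leq_exp2l //; lia.
set p := x %/ 4.
have hxp : x = 4 * p + 1 by rewrite /p; lia.
have hp : 2 <= p by lia.
have hv : v = 6 * p + 1.
  rewrite /v e1 expnD -/x expn1; lia.
have h3m : 3 ^ m = 3 * x * x.
  rewrite hm expnD expn1 (_ : 4 * s = 2 * s + 2 * s); last lia.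
  rewrite expnD -/x; lia.
have hn : n = 3 * x * x - 1 by rewrite /n h3m.
have hn' : n = 48 * (p * p) + 24 * p + 2.
  rewrite hn hxp mulnDr !mulnDl !mul1n !muln1 !mulnA; lia.
have hd : delta = 2 * p + 3 by rewrite /delta e2 -/x; lia.
split.
  rewrite /coprime; apply/eqP.
  set g := gcdn v n.
  have gv : g %| v := dvdn_gcdl v n.
  have gn : g %| n := dvdn_gcdr v n.
  have e : 2 * v * (12 * p + 4) = 3 * n + 2 by rewrite hv hn' !mulnDr !mulnDl !mulnA; lia.
  have g2 : g %| 2.
    by rewrite -(dvdn_addr 2 (dvdn_mull 3 gn)) -e dvdn_mulr // dvdn_mull.
  have : g <= 2 by apply: dvdn_leq.
  have : 0 < g by rewrite /g gcdn_gt0 hv addn1.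
  have : g != 2 by apply/eqP => g2e; move: gv; rewrite g2e hv; lia.
  lia.
move=> k hk.
have hj : 1 <= n - k <= 2 * p + 2 by rewrite hd in hk; lia.
have hkj : k = n - (n - k) by lia.
move: hj hkj; set j := n - k => hj hkj.
have hw2 : forall a, a < x -> w3 (2 * s) a %% 2 = a %% 2 by move=> a ha; exact: w3_par.
have hxa : forall a d c, a < x -> d < 3 -> w3 m (a + x * (d + 3 ^ 1 * c)) = w3 (2 * s) a + d + w3 (2 * s) c.
  by move=> a d c ha hd'; rewrite hm; apply: w3_struct.
have hodd : j %% 2 = odd j by rewrite modn2.
case: (boolP (j == 2 * p + 1)) => [/eqP hj1 | hj1].
  apply: (@pick _ _ _ ((x - 2) + x * (0 + 3 ^ 1 * (x - 1)))).
  - rewrite -/n hn' hxp expn1; exact: Lsp_lt hp.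
  - apply: leq_trans (_ : 1 <= x - 2) (leq_addr _ _); move: hxp hp; clear; lia.
  - right; rewrite hxa; [| move: hxp hp; clear; lia | done].
    have f1 : w3 (2 * s) (x - 1) = 2 * (2 * s) by exact: w3_full.
    have e : 2 * s = 1 + (2 * s - 1) by move: hs; clear; lia.
    have ex : x - 2 = 1 + 3 ^ 1 * (3 ^ (2 * s - 1) - 1).
      rewrite /x {1}e expnD expn1; apply: sub2; exact: expn_gt0.
    have f2 : w3 (2 * s) (x - 2) = 1 + 2 * (2 * s - 1).
      by rewrite ex {1}e w3_split ?expn1 // w3_1 // w3_full.
    rewrite f1 f2; move: hs; clear; lia.
  - rewrite -/n hkj hj1; symmetry; apply: (@modlem _ _ (6 * p)).
      rewrite hv hn' hxp expn1; exact: Lsp_eq hp.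
    rewrite hn'; move: hp; clear; lia.
have hj1' : j <> 2 * p + 1 by apply/eqP.
case: (boolP (odd j)) => hoj.
  have hj2 : j %% 2 = 1 by rewrite modn2 hoj.
  pose t := (2 * p - 1 - j) %/ 2.
  have ht : 2 * t + 1 + j = 2 * p by rewrite /t; move: hj hj1' hj2; clear; lia.
  have ha : 2 * t + 1 < x by move: ht hxp; clear; lia.
  apply: (@pick _ _ _ ((2 * t + 1) + x * (1 + 3 ^ 1 * (2 * t + 1)))).
  - rewrite -/n hn' hxp expn1; apply: (Lodd_lt hp ht); move: hj; clear; lia.
  - apply: leq_trans _ (leq_addr _ _); exact: leq_addl.
  - right; rewrite hxa //; have := hw2 _ ha.
    move: (w3 (2 * s) (2 * t + 1)) => w; clear; lia.
  - rewrite -/n hkj; symmetry; apply: (@modlem _ _ (3 * t + 2)).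
      rewrite hv hn' hxp expn1; exact: Lodd_eq hp ht.
    rewrite hn'; move: hj; clear; lia.
have hj2 : j %% 2 = 0 by rewrite modn2 (negbTE hoj).
pose t := (4 * p - j) %/ 2.
have ht : 2 * t + j = 4 * p by rewrite /t; move: hj hj2 hp; clear; lia.
have ha : 2 * t < x by rewrite hxp; move: ht; clear; lia.
apply: (@pick _ _ _ ((2 * t) + x * (2 + 3 ^ 1 * (2 * t)))).
- rewrite -/n hn' hxp expn1; apply: Lev_lt hp ht _; move: hj hj2; clear; lia.
- rewrite hxp expn1; clear; nia.
- left; rewrite hxa //; have := hw2 _ ha.
  move: (w3 (2 * s) (2 * t)) => w; clear; lia.
- rewrite -/n hkj; symmetry; apply: (@modlem _ _ (3 * t + 1)).
    rewrite hv hn' hxp expn1; exact: Lev_eq hp ht.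
  rewrite hn'; move: hj; clear; lia.
Qed.
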